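(* There are universal constants $0<c_1\le c_2$ such that for all positive integers $m$ and all $p,q\in[0,1]$, \[ c_1\min\left(m|p-q|,\frac{\sqrt m\,|p-q|}{\sqrt{p(1-p)}},1\right)\le \ell_1(\mathrm{Bin}(m,p),\mathrm{Bin}(m,q))\le c_2\min\left(m|p-q|,\frac{\sqrt m\,|p-q|}{\sqrt{p(1-p)}},1\right). \]
   Context: $\ell_1(P,Q)=\sum_x|P(x)-Q(x)|$ for distributions on $\{0,1,\dots,m\}$, and $\mathrm{Bin}(m,p)$ is the binomial distribution. When $p(1-p)=0$ the middle term is interpreted as $+\infty$ if $p\neq q$ (and $0$ if $p=q$). *)

(* Defs.v *)
From Stdlib Require Import Reals.
Open Scope R_scope.

Definition binom_pmf (m : nat) (p : R) (k : nat) : R :=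
  C m k * p ^ k * (1 - p) ^ (m - k).

Definition l1_binom (m : nat) (p q : R) : R :=
  sum_f_R0 (fun k => Rabs (binom_pmf m p k - binom_pmf m q k)) m.

(* min( m|p-q|, sqrt m |p-q| / sqrt(p(1-p)), 1 ), where the middle term
   is +infinity when p(1-p) = 0 and p <> q, and 0 when p = q
   (in which case m|p-q| = 0 as well, so dropping it changes nothing). *)
Definition rate (m : nat) (p q : R) : R :=
  if Req_EM_T (p * (1 - p)) 0 then Rmin (INR m * Rabs (p - q)) 1
  else Rmin (Rmin (INR m * Rabs (p - q))
                  (sqrt (INR m) * Rabs (p - q) / sqrt (p * (1 - p)))) 1.

(* Main.v *)
Require Import Defs.
From Stdlib Require Import Reals Lra Lia Psatz.
Open Scope R_scope.

Definition sh (a : nat -> R) (k : nat) : R := match k with 0%nat => 0 | S j => a j end.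
Definition cut (m : nat) (b : nat -> R) (k : nat) : R := if Nat.leb k m then b k else 0.

Lemma sum_sh a m : sum_f_R0 (sh a) (S m) = sum_f_R0 a m.
Proof.
  rewrite decomp_sum; [|lia]. simpl pred. simpl sh. rewrite Rplus_0_l. reflexivity.
Qed.

Lemma sum_cut b m : sum_f_R0 (cut m b) (S m) = sum_f_R0 b m.
Proof.
  rewrite tech5. unfold cut at 2. replace (Nat.leb (S m) m) with false.
  2:{ symmetry; apply Nat.leb_gt; lia. }
  rewrite Rplus_0_r. apply sum_eq. intros i Hi. unfold cut.
  replace (Nat.leb i m) with true; auto. symmetry; apply Nat.leb_le; lia.
Qed.

Lemma C_n0 n : C n 0 = 1.
Proof. unfold C. rewrite Nat.sub_0_r. simpl. field. apply INR_fact_neq_0. Qed.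

Lemma C_nn n : C n n = 1.
Proof. unfold C. rewrite Nat.sub_diag. simpl. field. apply INR_fact_neq_0. Qed.

Lemma C_pos n k : (k <= n)%nat -> 0 < C n k.
Proof.
  intros _. unfold C. apply Rdiv_lt_0_compat. apply INR_fact_lt_0.
  apply Rmult_lt_0_compat; apply INR_fact_lt_0.
Qed.

Lemma pmf_rec m p k : (k <= S m)%nat ->
  binom_pmf (S m) p k =
  sh (fun j => p * binom_pmf m p j) k + cut m (fun j => (1-p) * binom_pmf m p j) k.
Proof.
  intros Hk. unfold binom_pmf, sh, cut. destruct k as [|j].
  - simpl Nat.leb. rewrite !C_n0. rewrite !Nat.sub_0_r. simpl. ring.
  - destruct (Nat.eq_dec j m) as [->|Hne].
    + replace (Nat.leb (S m) m) with false by (symmetry; apply Nat.leb_gt; lia).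
      rewrite !C_nn, !Nat.sub_diag. simpl. ring.
    + replace (Nat.leb (S j) m) with true by (symmetry; apply Nat.leb_le; lia).
      rewrite <- pascal by lia.
      replace (S m - S j)%nat with (m - j)%nat by lia.
      replace (m - j)%nat with (S (m - S j)) by lia.
      simpl. ring.
Qed.

Definition E (m : nat) (p : R) (g : nat -> R) : R :=
  sum_f_R0 (fun k => binom_pmf m p k * g k) m.

Lemma E_rec m p g :
  E (S m) p g = p * E m p (fun k => g (S k)) + (1 - p) * E m p g.
Proof.
  unfold E.
  rewrite (sum_eq _ (fun k => sh (fun j => p * binom_pmf m p j * g (S j)) k +
                       cut m (fun j => (1-p) * binom_pmf m p j * g j) k)).
  2:{ intros i Hi. rewrite pmf_rec by lia. unfold sh, cut. destruct (Nat.leb i m); destruct i; cbv beta iota; ring. }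
  rewrite plus_sum, sum_sh, sum_cut.
  rewrite !scal_sum. f_equal; apply sum_eq; intros; ring.
Qed.

Lemma E_ext m p g h : (forall k, (k <= m)%nat -> g k = h k) -> E m p g = E m p h.
Proof. intros H. unfold E. apply sum_eq. intros i Hi. rewrite H; auto. Qed.

Lemma E_lin m p g h a b : E m p (fun k => a * g k + b * h k) = a * E m p g + b * E m p h.
Proof.
  unfold E. rewrite !scal_sum, <- plus_sum. apply sum_eq. intros; ring.
Qed.

Lemma E_mono m p g h : 0 <= p <= 1 -> (forall k, (k <= m)%nat -> g k <= h k) -> E m p g <= E m p h.
Proof.
  intros Hp H. unfold E. apply sum_Rle. intros i Hi. apply Rmult_le_compat_l; auto.
  unfold binom_pmf. apply Rmult_le_pos; [apply Rmult_le_pos|]; try apply pow_le; try lra.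
  left; apply C_pos; auto.
Qed.

Lemma E_one m p : E m p (fun _ => 1) = 1.
Proof.
  induction m. unfold E, binom_pmf. simpl. rewrite C_n0. ring.
  rewrite E_rec, IHm. ring.
Qed.

Lemma E_Z2 m p c : E m p (fun k => (INR k - c)^2) = (INR m * p - c)^2 + INR m * (p*(1-p)).
Proof.
  revert c. induction m; intro c.
  - unfold E, binom_pmf. simpl. rewrite C_n0. ring.
  - rewrite E_rec. rewrite (E_ext _ _ _ (fun k => (INR k - (c-1))^2)).
    2:{ intros; rewrite S_INR; ring. }
    rewrite !IHm. rewrite S_INR. ring.
Qed.

Lemma E_Z4 m p c : E m p (fun k => (INR k - c)^4) =
  let e := INR m * p - c in let v := INR m * (p*(1-p)) in
  e^4 + 6*e^2*v + 4*e*v*(1-2*p) + 3*v^2 + v*(1-6*(p*(1-p))).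
Proof.
  revert c. induction m; intro c.
  - unfold E, binom_pmf. simpl. rewrite C_n0. ring.
  - rewrite E_rec. rewrite (E_ext _ _ _ (fun k => (INR k - (c-1))^4)).
    2:{ intros; rewrite S_INR; ring. }
    rewrite !IHm. cbv zeta. rewrite S_INR. ring.
Qed.

Lemma pmf_nonneg m p k : 0 <= p <= 1 -> (k <= m)%nat -> 0 <= binom_pmf m p k.
Proof.
  intros Hp Hk. unfold binom_pmf.
  apply Rmult_le_pos; [apply Rmult_le_pos|]; try apply pow_le; try lra.
  left; apply C_pos; auto.
Qed.

Lemma sum_pmf m p : sum_f_R0 (fun k => binom_pmf m p k) m = 1.
Proof.
  rewrite <- (E_one m p). unfold E. apply sum_eq. intros; ring.
Qed.

Lemma sum_scal_l (f : nat -> R) c n : sum_f_R0 (fun i => c * f i) n = c * sum_f_R0 f n.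
Proof. rewrite scal_sum. apply sum_eq; intros; ring. Qed.

Lemma l1_le_2 m p q : 0 <= p <= 1 -> 0 <= q <= 1 -> l1_binom m p q <= 2.
Proof.
  intros Hp Hq. unfold l1_binom.
  apply Rle_trans with (sum_f_R0 (fun k => binom_pmf m p k + binom_pmf m q k) m).
  - apply sum_Rle. intros n Hn. 
    pose proof (pmf_nonneg m p n Hp Hn). pose proof (pmf_nonneg m q n Hq Hn).
    unfold Rabs; destruct (Rcase_abs _); lra.
  - rewrite plus_sum, !sum_pmf. lra.
Qed.

Lemma l1_nonneg m p q : 0 <= l1_binom m p q.
Proof. unfold l1_binom. apply cond_pos_sum. intros; apply Rabs_pos. Qed.

Lemma l1_step m p q : 0 <= p <= 1 -> 0 <= q <= 1 ->
  l1_binom (S m) p q <= l1_binom m p q + 2 * Rabs (p - q).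
Proof.
  intros Hp Hq. unfold l1_binom at 1.
  apply Rle_trans with (sum_f_R0 (fun k =>
     sh (fun j => p * Rabs (binom_pmf m p j - binom_pmf m q j) + Rabs (p - q) * binom_pmf m q j) k +
     cut m (fun j => (1-p) * Rabs (binom_pmf m p j - binom_pmf m q j) + Rabs (p - q) * binom_pmf m q j) k) (S m)).
  - apply sum_Rle. intros k Hk. rewrite !pmf_rec by lia.
    unfold sh, cut. destruct (Nat.leb k m) eqn:Eb; [apply Nat.leb_le in Eb|]; destruct k as [|j]; cbv beta iota.
    + rewrite !Rplus_0_l.
      replace ((1 - p) * binom_pmf m p 0 - (1 - q) * binom_pmf m q 0) with
        ((1-p) * (binom_pmf m p 0 - binom_pmf m q 0) + (q - p) * binom_pmf m q 0) by ring.
      eapply Rle_trans; [apply Rabs_triang|]. rewrite !Rabs_mult.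
      rewrite (Rabs_right (1-p)) by lra. rewrite (Rabs_right (binom_pmf m q 0)) by (apply Rle_ge, pmf_nonneg; auto; lia).
      rewrite (Rabs_minus_sym q p). lra.
    + set (a1 := binom_pmf m p j). set (a2 := binom_pmf m q j).
      set (b1 := binom_pmf m p (S j)). set (b2 := binom_pmf m q (S j)).
      assert (0 <= a2) by (apply pmf_nonneg; auto; lia).
      assert (0 <= b2) by (apply pmf_nonneg; auto; lia).
      replace (p * a1 + (1 - p) * b1 - (q * a2 + (1 - q) * b2)) with
        ((p * (a1 - a2) + (p - q) * a2) + ((1-p) * (b1 - b2) + (q - p) * b2)) by ring.
      eapply Rle_trans; [apply Rabs_triang|]. apply Rplus_le_compat;
      (eapply Rle_trans; [apply Rabs_triang|]); rewrite !Rabs_mult;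
      rewrite ?(Rabs_right p) by lra; rewrite ?(Rabs_right (1-p)) by lra;
      rewrite ?(Rabs_right a2) by lra; rewrite ?(Rabs_right b2) by lra;
      rewrite ?(Rabs_minus_sym q p); lra.
    + simpl in Eb; discriminate.
    + rewrite !Rplus_0_r.
      replace (p * binom_pmf m p j - q * binom_pmf m q j) with
        (p * (binom_pmf m p j - binom_pmf m q j) + (p - q) * binom_pmf m q j) by ring.
      eapply Rle_trans; [apply Rabs_triang|]. rewrite !Rabs_mult.
      rewrite (Rabs_right p) by lra. rewrite (Rabs_right (binom_pmf m q j)) by (apply Rle_ge, pmf_nonneg; auto; lia).
      lra.
  - rewrite plus_sum, sum_sh, sum_cut, !plus_sum.
    rewrite !sum_scal_l.
    rewrite sum_pmf. unfold l1_binom. lra.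
Qed.

Lemma l1_le_lin m p q : 0 <= p <= 1 -> 0 <= q <= 1 ->
  l1_binom m p q <= 2 * INR m * Rabs (p - q).
Proof.
  intros Hp Hq. induction m.
  - unfold l1_binom, binom_pmf. simpl. rewrite C_n0. 
    replace (1*1*1 - 1*1*1) with 0 by ring. rewrite Rabs_R0. lra.
  - eapply Rle_trans; [apply l1_step; auto|]. rewrite S_INR. lra.
Qed.

Lemma bernoulli y n : -1 <= y -> 1 + INR n * y <= (1 + y) ^ n.
Proof.
  intros Hy. induction n.
  - simpl. lra.
  - rewrite S_INR. simpl.
    assert (0 <= INR n) by apply pos_INR.
    nra.
Qed.

Lemma pow_upper y m : 0 <= y -> INR m * y <= 1/2 -> (1 + y) ^ m <= 1 + 2 * (INR m * y).
Proof.
  intros Hy Hm. destruct m as [|m'].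
  - simpl. lra.
  - set (z := INR (S m') * y) in *.
    assert (H1 : 1 <= INR (S m')) by (rewrite S_INR; pose proof (pos_INR m'); lra).
    assert (Hy2 : y <= 1/2) by (assert (y <= z) by (unfold z; nra); lra).
    assert (Hw : 1 - z <= (1 - y) ^ (S m')).
    { replace (1 - y) with (1 + (-y)) by ring. unfold z.
      pose proof (bernoulli (-y) (S m')). lra. }
    assert (Hp : (1 + y) ^ (S m') * (1 - y) ^ (S m') <= 1).
    { rewrite <- Rpow_mult_distr. apply Rle_trans with (1 ^ (S m')); [apply pow_incr; split; nra | rewrite pow1; lra]. }
    assert (Hu : 0 <= (1 + y) ^ (S m')) by (apply pow_le; lra).
    assert (Hz : 0 <= z) by (unfold z; pose proof (pos_INR (S m')); nra).
    set (u := (1 + y) ^ (S m')) in *. set (w := (1 - y) ^ (S m')) in *.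
    assert (u * (1 - z) <= 1) by nra.
    nra.
Qed.

Lemma chi_sum m p q : 0 < p < 1 ->
  sum_f_R0 (fun k => binom_pmf m q k ^ 2 / binom_pmf m p k) m =
  (q ^ 2 / p + (1 - q) ^ 2 / (1 - p)) ^ m.
Proof.
  intros Hp. rewrite binomial. apply sum_eq. intros k Hk.
  unfold binom_pmf.
  assert (0 < C m k) by (apply C_pos; auto).
  assert (0 < p ^ k) by (apply pow_lt; lra).
  assert (0 < (1-p) ^ (m - k)) by (apply pow_lt; lra).
  unfold Rdiv. rewrite !Rpow_mult_distr, !pow_inv.
  rewrite <- !pow_mult. rewrite !(Nat.mul_comm 2). rewrite !pow_mult.
  field. repeat split; lra.
Qed.

Lemma amgm_abs P Q t : 0 < P -> 0 < t ->
  Rabs (P - Q) <= ((Q ^ 2 / P - 2 * Q + P) / t + t * P) / 2.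
Proof.
  intros HP Ht.
  replace ((Q ^ 2 / P - 2 * Q + P) / t + t * P) with (((P - Q)^2 + (t*P)^2) / (t * P)) by (field; repeat split; lra).
  assert (0 < t * P) by nra.
  apply Rmult_le_reg_r with (2 * (t * P)). nra.
  replace (((P - Q) ^ 2 + (t * P) ^ 2) / (t * P) / 2 * (2 * (t * P))) with ((P - Q) ^ 2 + (t * P) ^ 2) by (field; repeat split; lra).
  set (D := P - Q). set (T := t * P). assert (0 <= (Rabs D - T)^2) by apply pow2_ge_0. assert (Rabs D * Rabs D = D^2) by (rewrite <- Rabs_mult; simpl; rewrite Rmult_1_r; apply Rabs_right; nra). nra.
Qed.

Lemma l1_chi m p q : 0 < p < 1 -> 0 <= q <= 1 ->
  let x := INR m * ((p - q) ^ 2 / (p * (1 - p))) in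
  0 < x -> x <= 1/2 -> l1_binom m p q <= 3/2 * sqrt x.
Proof.
  intros Hp Hq x Hx0 Hx.
  set (t := sqrt x).
  assert (Ht : 0 < t) by (apply sqrt_lt_R0; auto).
  assert (Htt : t * t = x) by (apply sqrt_sqrt; lra).
  unfold l1_binom.
  eapply Rle_trans.
  { apply sum_Rle. intros k Hk.
    apply (amgm_abs (binom_pmf m p k) (binom_pmf m q k) t); auto.
    unfold binom_pmf. apply Rmult_lt_0_compat; [apply Rmult_lt_0_compat|].
    apply C_pos; auto. apply pow_lt; lra. apply pow_lt; lra. }
  rewrite (sum_eq _ (fun k => /2 * (/t * (binom_pmf m q k ^ 2 / binom_pmf m p k)
                 + (-2/t) * binom_pmf m q k + (/t + t) * binom_pmf m p k))).
  2:{ intros k Hk. assert (0 < binom_pmf m p k) by (unfold binom_pmf; apply Rmult_lt_0_compat; [apply Rmult_lt_0_compat|]; [apply C_pos; auto|apply pow_lt; lra|apply pow_lt; lra]). field; split; lra. }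
  rewrite sum_scal_l, !plus_sum, !sum_scal_l, chi_sum, !sum_pmf by auto.
  replace (q ^ 2 / p + (1 - q) ^ 2 / (1 - p)) with (1 + (p - q) ^ 2 / (p * (1 - p))) by (field; repeat split; lra).
  assert (0 <= (p - q) ^ 2 / (p * (1 - p))).
  { apply Rmult_le_pos; [apply pow2_ge_0|]. left; apply Rinv_0_lt_compat; nra. }
  pose proof (pow_upper ((p - q) ^ 2 / (p * (1 - p))) m H Hx).
  fold x in H0.
  assert (/ t * (1 + (p - q) ^ 2 / (p * (1 - p))) ^ m <= /t * (1 + 2 * x)).
  { apply Rmult_le_compat_l; [left; apply Rinv_0_lt_compat|]; auto. }
  assert (/t * x = t) by (rewrite <- Htt; field; repeat split; lra).
  nra.
Qed.

Lemma sum_ge_term (f : nat -> R) n k : (forall i, 0 <= f i) -> (k <= n)%nat -> f k <= sum_f_R0 f n.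
Proof.
  intros Hf Hk. induction n.
  - replace k with 0%nat by lia. simpl. lra.
  - destruct (Nat.eq_dec k (S n)) as [->|Hne].
    + rewrite tech5. pose proof (cond_pos_sum f n Hf). lra.
    + rewrite tech5. pose proof (Hf (S n)). assert (f k <= sum_f_R0 f n) by (apply IHn; lia). lra.
Qed.

Lemma l1_ge_term m p q k : (k <= m)%nat -> Rabs (binom_pmf m p k - binom_pmf m q k) <= l1_binom m p q.
Proof.
  intros Hk. unfold l1_binom.
  apply (sum_ge_term (fun k => Rabs (binom_pmf m p k - binom_pmf m q k))); auto.
  intros; apply Rabs_pos.
Qed.

Lemma pmf_0 m p : binom_pmf m p 0 = (1 - p) ^ m.
Proof. unfold binom_pmf. rewrite C_n0, Nat.sub_0_r. simpl. ring. Qed.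

Lemma pmf_m m p : binom_pmf m p m = p ^ m.
Proof. unfold binom_pmf. rewrite C_nn, Nat.sub_diag. simpl. ring. Qed.

Lemma one_minus_pow m d : 0 <= d <= 1 -> Rmin (INR m * d) 1 / 2 <= 1 - (1 - d) ^ m.
Proof.
  intros Hd.
  assert (H1 : (1 - d) ^ m * (1 + d) ^ m <= 1).
  { rewrite <- Rpow_mult_distr. apply Rle_trans with (1 ^ m); [apply pow_incr; split; nra | rewrite pow1; lra]. }
  assert (H2 : 1 + INR m * d <= (1 + d) ^ m) by (apply bernoulli; lra).
  assert (H3 : 0 <= (1 - d) ^ m) by (apply pow_le; lra).
  assert (0 <= INR m) by apply pos_INR.
  assert (H4 : (1 - d) ^ m * (1 + INR m * d) <= 1) by nra.
  set (a := INR m * d) in *. set (u := (1 - d) ^ m) in *.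
  assert (0 <= a) by (unfold a; nra).
  unfold Rmin; destruct (Rle_dec a 1); nra.
Qed.

Lemma exp_pow x n : exp x ^ n = exp (INR n * x).
Proof.
  induction n. simpl. rewrite Rmult_0_l, exp_0. auto.
  rewrite S_INR. simpl. rewrite IHn. rewrite <- exp_plus. f_equal. ring.
Qed.

Lemma small_lb m p q : 0 <= p <= 1/2 -> INR m * p <= 2 -> 0 <= q <= 1 ->
  / (2 * exp 4) * Rmin (INR m * Rabs (p - q)) 1 <= Rabs ((1 - p) ^ m - (1 - q) ^ m).
Proof.
  intros Hp Hm Hq.
  assert (HE : / exp 4 <= (1 - p) ^ m).
  { assert (A1 : (1 + 2 * p) ^ m <= exp 4).
    { apply Rle_trans with (exp (2 * p) ^ m).
      - apply pow_incr. split. lra. pose proof (exp_ineq1_le (2*p)). lra.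
      - rewrite exp_pow. destruct (Req_dec (INR m * (2 * p)) 4) as [->|Hn]. lra.
        left. apply exp_increasing. lra. }
    assert (A2 : 1 <= (1 - p) ^ m * (1 + 2 * p) ^ m).
    { rewrite <- Rpow_mult_distr. rewrite <- (pow1 m) at 1. apply pow_incr. split. lra. nra. }
    assert (0 < exp 4) by apply exp_pos.
    assert (0 <= (1 - p) ^ m) by (apply pow_le; lra).
    apply Rmult_le_reg_l with (exp 4); auto. rewrite Rinv_r by lra. nra. }
  assert (0 < / exp 4) by (apply Rinv_0_lt_compat, exp_pos).
  set (u := (1 - p) ^ m) in *.
  assert (Hmin : 0 <= Rmin (INR m * Rabs (p - q)) 1).
  { apply Rmin_glb; [|lra]. apply Rmult_le_pos; [apply pos_INR|apply Rabs_pos]. }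
  assert (Hmin1 : Rmin (INR m * Rabs (p - q)) 1 <= 1) by apply Rmin_r.
  assert (KEY : u * (Rmin (INR m * Rabs (p - q)) 1 / 2) <= Rabs (u - (1 - q) ^ m)).
  { destruct (Rle_dec p q).
    - set (d := q - p). rewrite Rabs_left1 by lra. replace (- (p - q)) with d by (unfold d; ring).
      assert ((1 - q) ^ m <= (1 - d) ^ m * u).
      { unfold u. rewrite <- Rpow_mult_distr. apply pow_incr. unfold d. split. lra. nra. }
      pose proof (one_minus_pow m d ltac:(unfold d; lra)).
      assert (0 <= (1 - q) ^ m) by (apply pow_le; lra).
      assert (0 <= u) by (unfold u; apply pow_le; lra).
      assert (0 <= Rmin (INR m * d) 1) by (apply Rmin_glb; [apply Rmult_le_pos; [apply pos_INR|unfold d; lra]|lra]). assert (0 <= u * (1 - (1 - d) ^ m)) by (apply Rmult_le_pos; lra). rewrite Rabs_right by nra. nra.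
    - set (d := p - q). rewrite Rabs_right by (unfold d; lra).
      assert ((1 + d) ^ m * u <= (1 - q) ^ m).
      { unfold u. rewrite <- Rpow_mult_distr. apply pow_incr. unfold d. split. nra. nra. }
      pose proof (bernoulli d m ltac:(unfold d; lra)).
      assert (0 <= u) by (unfold u; apply pow_le; lra).
      assert (Rmin (INR m * d) 1 <= INR m * d) by apply Rmin_l.
      assert (0 <= INR m * d) by (apply Rmult_le_pos; [apply pos_INR|unfold d; lra]). assert (0 <= u * ((1 + d) ^ m - 1 - INR m * d)) by (apply Rmult_le_pos; lra). rewrite Rabs_left1 by nra. nra. }
  assert (/ exp 4 * (Rmin (INR m * Rabs (p - q)) 1 / 2) <= u * (Rmin (INR m * Rabs (p - q)) 1 / 2)).
  { apply Rmult_le_compat_r; lra. }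
  rewrite Rinv_mult. lra.
Qed.

Lemma min_quad u : 0 <= u -> u - u ^ 2 / 4 <= Rmin u 1.
Proof.
  intros Hu. apply Rmin_glb. assert (0 <= u^2) by apply pow2_ge_0. lra.
  assert (0 <= (u - 2)^2) by apply pow2_ge_0. lra.
Qed.

Lemma abs_quartic z K : 0 < K -> 3/2 * z ^ 2 / K - z ^ 4 / (2 * K ^ 3) <= Rabs z.
Proof.
  intros HK. set (a := Rabs z).
  assert (Ha : 0 <= a) by apply Rabs_pos.
  assert (H2 : z ^ 2 = a ^ 2) by (unfold a; rewrite pow2_abs; auto).
  assert (H4 : z ^ 4 = (a ^ 2) ^ 2) by (rewrite <- H2; ring).
  rewrite H4, H2.
  assert (0 <= a * (a - K) ^ 2 * (a + 2 * K)).
  { apply Rmult_le_pos. apply Rmult_le_pos; auto. apply pow2_ge_0. lra. }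
  assert (0 < K ^ 3) by (apply pow_lt; lra).
  apply Rmult_le_reg_r with (2 * K ^ 3). lra.
  replace ((3 / 2 * a ^ 2 / K - (a ^ 2) ^ 2 / (2 * K ^ 3)) * (2 * K ^ 3)) with
     (3 * a ^ 2 * K ^ 2 - a ^ 4) by (field; lra).
  nra.
Qed.

Lemma div_le_r a D r : 0 < D -> a <= r * D -> a / D <= r.
Proof. intros HD H. apply Rmult_le_reg_r with D; auto. unfold Rdiv. rewrite Rmult_assoc, Rinv_l by lra. lra. Qed.

Lemma div_ge_r a D r : 0 < D -> r * D <= a -> r <= a / D.
Proof. intros HD H. apply Rmult_le_reg_r with D; auto. unfold Rdiv. rewrite Rmult_assoc, Rinv_l by lra. lra. Qed.

Lemma Rmin_nonneg u : 0 <= u -> 0 <= Rmin u 1.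
Proof. intros; apply Rmin_glb; lra. Qed.

Lemma core m p c b s0 : 0 < p < 1 ->
  s0 * s0 = INR m * (p * (1 - p)) -> 1 <= s0 -> 0 < b -> b * s0 <= 1/200 ->
  b * s0 / 40 <= E m p (fun k => Rmin (b * Rabs (INR k - c)) 1).
Proof.
  intros Hp Hs Hs1 Hb Hbs.
  set (v := INR m * (p * (1 - p))) in *.
  set (d := INR m * p - c).
  destruct (Rle_dec (16 * v) (d ^ 2)) as [Hd|Hd].
  -
    assert (Hd0 : 0 < d ^ 2) by nra.
    assert (Hdn : d <> 0) by (intro Hz; rewrite Hz in Hd0; simpl in Hd0; lra).
    apply Rle_trans with (E m p (fun k => (2 * b * s0) * 1 + (- 8 * b * s0 / d ^ 2) * (INR k - INR m * p) ^ 2)).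
    + rewrite E_lin, E_one, E_Z2. replace (INR m * p - INR m * p) with 0 by ring. fold v.
      assert (v / d ^ 2 <= 1/16).
      { apply div_le_r; auto. lra. }
      assert (0 < b * s0) by nra.
      replace (-8 * b * s0 / d ^ 2 * (0 ^ 2 + v)) with (-8 * (b * s0) * (v / d ^ 2)) by (field; auto).
      nra.
    + apply E_mono; [lra|]. intros k Hk.
      set (w := INR k - INR m * p).
      replace (INR k - c) with (w + d) by (unfold w, d; ring).
      destruct (Rle_dec (d ^ 2) (4 * w ^ 2)) as [Hw|Hw].
      * assert (0 <= Rmin (b * Rabs (w + d)) 1) by (apply Rmin_nonneg; apply Rmult_le_pos; [lra|apply Rabs_pos]).
        assert (- 8 * b * s0 / d ^ 2 * w ^ 2 = - (2 * b * s0) * (4 * w ^ 2 / d ^ 2)) by (field; auto).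
        assert (1 <= 4 * w ^ 2 / d ^ 2).
        { apply div_ge_r; auto. lra. }
        assert (0 < b * s0) by nra.
        nra.
      * assert (Hw2 : 0 <= w ^ 2) by apply pow2_ge_0.
        assert (0 <= 8 * b * s0 * w ^ 2 / d ^ 2).
        { apply Rmult_le_pos. apply Rmult_le_pos; nra. left; apply Rinv_0_lt_compat; auto. }
        replace (- 8 * b * s0 / d ^ 2 * w ^ 2) with (- (8 * b * s0 * w ^ 2 / d ^ 2)) by (field; auto).
        assert (2 * b * s0 <= Rmin (b * Rabs (w + d)) 1).
        { apply Rmin_glb; [|lra].
          assert (Ad : 4 * s0 <= Rabs d).
          { assert (0 <= Rabs d) by apply Rabs_pos.
            assert (Rabs d ^ 2 = d ^ 2) by apply pow2_abs. nra. }
          assert (Aw : 2 * Rabs w <= Rabs d).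
          { assert (0 <= Rabs d) by apply Rabs_pos. assert (0 <= Rabs w) by apply Rabs_pos.
            assert (Rabs d ^ 2 = d ^ 2) by apply pow2_abs.
            assert (Rabs w ^ 2 = w ^ 2) by apply pow2_abs. nra. }
          assert (Rabs d <= Rabs (w + d) + Rabs w).
          { replace d with ((w + d) + - w) at 1 by ring. 
            eapply Rle_trans; [apply Rabs_triang|]. rewrite Rabs_Ropp. lra. }
          nra. }
        lra.
  -
    apply Rnot_le_lt in Hd.
    set (K := 20 * s0).
    assert (HK : 0 < K) by (unfold K; lra).
    set (a2 := 3 * b / (2 * K) - b ^ 2 / 4).
    set (a4 := b / (2 * K ^ 3)).
    apply Rle_trans with (E m p (fun k => a2 * (INR k - c) ^ 2 + (- a4) * (INR k - c) ^ 4)).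
    + rewrite E_lin, E_Z2, E_Z4. cbv zeta. fold v. fold d.
      assert (Hv : v = s0 ^ 2) by (rewrite <- Hs; ring).
      assert (Ad : Rabs d <= 4 * s0).
      { assert (0 <= Rabs d) by apply Rabs_pos. assert (Rabs d ^ 2 = d ^ 2) by apply pow2_abs. nra. }
      assert (Hd2 : d ^ 2 <= 16 * s0 ^ 2) by lra.
      assert (Hd4 : d ^ 4 <= 256 * s0 ^ 4).
      { replace (d ^ 4) with ((d ^ 2) ^ 2) by ring. assert (0 <= d ^ 2) by apply pow2_ge_0. nra. }
      assert (Hd3 : d * v * (1 - 2 * p) <= 4 * s0 ^ 4).
      { assert (d * (1 - 2 * p) <= Rabs d).
        { assert (Rabs (d * (1 - 2 * p)) <= Rabs d).
          { rewrite Rabs_mult. assert (Rabs (1 - 2 * p) <= 1) by (unfold Rabs; destruct (Rcase_abs _); lra).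
            assert (0 <= Rabs d) by apply Rabs_pos. nra. }
          pose proof (Rle_abs (d * (1 - 2 * p))). lra. }
        assert (0 <= v) by (rewrite Hv; apply pow2_ge_0).
        assert (d * v * (1 - 2 * p) <= Rabs d * v) by nra.
        assert (s0 ^ 3 <= s0 ^ 4) by (simpl; nra).
        rewrite Hv in *. simpl in *. nra. }
      assert (Hf4 : d ^ 4 + 6 * d ^ 2 * v + 4 * d * v * (1 - 2 * p) + 3 * v ^ 2 +
                    v * (1 - 6 * (p * (1 - p))) <= 400 * s0 ^ 4).
      { assert (v * (1 - 6 * (p * (1 - p))) <= v ^ 2).
        { assert (1 <= v) by (rewrite Hv; simpl; nra). assert (0 <= p * (1 - p)) by nra.
          assert (v * (1 - 6 * (p * (1 - p))) <= v) by nra. simpl. nra. }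
        assert (6 * d ^ 2 * v <= 96 * s0 ^ 4) by (rewrite Hv; simpl in *; nra).
        assert (v ^ 2 = s0 ^ 4) by (rewrite Hv; ring).
        nra. }
      assert (Ha4 : a4 * (400 * s0 ^ 4) = b * s0 / 40).
      { unfold a4, K. field. lra. }
      assert (Ha4p : 0 <= a4).
      { unfold a4. apply Rmult_le_pos; [lra|]. left; apply Rinv_0_lt_compat. assert (0 < K^3) by (apply pow_lt; lra). lra. }
      assert (Ha2v : a2 * v = 3 * (b * s0) / 40 - (b * s0) ^ 2 / 4).
      { unfold a2, K. rewrite Hv. field. lra. }
      assert (Ha2p : 0 <= a2).
      { unfold a2. assert (b <= 1 / (200 * s0)) by (apply div_ge_r; lra).
        assert (b ^ 2 / 4 <= b / (800 * s0)).
        { assert (E1 : b / (800 * s0) = b * (1 / (200 * s0)) / 4) by (field; lra).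
          rewrite E1. assert (b * b <= b * (1 / (200 * s0))) by (apply Rmult_le_compat_l; lra).
          simpl. lra. }
        replace (3 * b / (2 * K)) with (b / (800 * s0) * 60) by (unfold K; field; lra).
        assert (0 <= b / (800 * s0)) by (apply Rmult_le_pos; [lra|left; apply Rinv_0_lt_compat; lra]).
        lra. }
      assert (0 <= a2 * d ^ 2) by (apply Rmult_le_pos; [auto|apply pow2_ge_0]).
      assert (a4 * (d ^ 4 + 6 * d ^ 2 * v + 4 * d * v * (1 - 2 * p) + 3 * v ^ 2 +
                    v * (1 - 6 * (p * (1 - p)))) <= a4 * (400 * s0 ^ 4)) by (apply Rmult_le_compat_l; auto).
      assert ((b * s0) ^ 2 <= b * s0 / 200) by (assert (0 < b * s0) by nra; simpl; nra).
      nra.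
    + apply E_mono; [lra|]. intros k Hk.
      set (z := INR k - c).
      pose proof (min_quad (b * Rabs z) ltac:(apply Rmult_le_pos; [lra|apply Rabs_pos])).
      pose proof (abs_quartic z K HK).
      assert ((b * Rabs z) ^ 2 = b ^ 2 * z ^ 2) by (rewrite Rpow_mult_distr, pow2_abs; auto).
      assert (a2 * z ^ 2 + - a4 * z ^ 4 = b * (3 / 2 * z ^ 2 / K - z ^ 4 / (2 * K ^ 3)) - b ^ 2 * z ^ 2 / 4).
      { unfold a2, a4. field. lra. }
      nra.
Qed.

Lemma exp_k_ln x k : 0 < x -> exp (INR k * ln x) = x ^ k.
Proof. intros. rewrite <- Rpower_pow by auto. reflexivity. Qed.

Lemma lnd a b : 0 < a -> 0 < b -> 1 - b / a <= ln a - ln b.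
Proof.
  intros Ha Hb. pose proof (exp_ineq1_le (ln b - ln a)).
  unfold Rminus in H at 2. rewrite exp_plus, exp_Ropp, !exp_ln in H by auto.
  unfold Rdiv. lra.
Qed.

Lemma exp_gap L : Rmin (Rabs L) 1 / 2 <= Rabs (1 - exp L).
Proof.
  destruct (Rle_dec 0 L) as [HL|HL].
  - pose proof (exp_ineq1_le L). rewrite (Rabs_left1 (1 - exp L)) by lra. rewrite (Rabs_right L) by lra.
    pose proof (Rmin_l L 1). assert (0 <= Rmin L 1) by (apply Rmin_glb; lra). lra.
  - set (y := - L). assert (Hy : 0 < y) by (unfold y; lra).
    assert (He : exp L * exp y = 1) by (unfold y; rewrite <- exp_plus; replace (L + - L) with 0 by ring; apply exp_0).
    pose proof (exp_ineq1_le y). pose proof (exp_pos L).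
    assert (exp L * (1 + y) <= 1) by nra.
    rewrite (Rabs_left L) by lra. rewrite (Rabs_right (1 - exp L)) by nra. fold y.
    unfold Rmin; destruct (Rle_dec y 1); nra.
Qed.

Lemma Q_eq m p q k : 0 < p < 1 -> 0 < q < 1 -> (k <= m)%nat ->
  binom_pmf m q k = binom_pmf m p k *
     exp (INR k * (ln q - ln p) + INR (m - k) * (ln (1 - q) - ln (1 - p))).
Proof.
  intros Hp Hq Hk.
  rewrite exp_plus. rewrite !Rmult_minus_distr_l. unfold Rminus. rewrite !exp_plus, !exp_Ropp.
  rewrite !exp_k_ln by lra.
  unfold binom_pmf.
  assert (0 < p ^ k) by (apply pow_lt; lra).
  assert (0 < (1 - p) ^ (m - k)) by (apply pow_lt; lra).
  replace (1 + - q) with (1 - q) by ring. replace (1 + - p) with (1 - p) by ring.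
  set (a := p ^ k) in *. set (b := (1 - p) ^ (m - k)) in *. set (c := q ^ k). set (d := (1 - q) ^ (m - k)).
  field. lra.
Qed.

Lemma beta_bound p q : 0 < p < 1 -> 0 < q < 1 -> p <> q ->
  Rmin (Rabs (p - q) / (2 * (p * (1 - p)))) (1/2) <=
  Rabs (ln q - ln p - (ln (1 - q) - ln (1 - p))).
Proof.
  intros Hp Hq Hpq.
  assert (Hs : 0 < p * (1 - p)) by nra.
  destruct (Rlt_le_dec p q) as [Hlt|Hge].
  - pose proof (lnd q p ltac:(lra) ltac:(lra)).
    pose proof (lnd (1 - p) (1 - q) ltac:(lra) ltac:(lra)).
    assert (E1 : 1 - p / q = (q - p) / q) by (field; lra).
    assert (E2 : 1 - (1 - q) / (1 - p) = (q - p) / (1 - p)) by (field; lra).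
    assert (0 <= (q - p) / q) by (apply Rmult_le_pos; [lra|left; apply Rinv_0_lt_compat; lra]).
    assert (0 <= (q - p) / (1 - p)) by (apply Rmult_le_pos; [lra|left; apply Rinv_0_lt_compat; lra]).
    rewrite Rabs_left1 by lra. rewrite Rabs_right by lra.
    destruct (Rle_dec q (2 * p)).
    + apply Rle_trans with (- (p - q) / (2 * (p * (1 - p)))); [apply Rmin_l|].
      assert ((q - p) / (2 * p) <= (q - p) / q).
      { unfold Rdiv. apply Rmult_le_compat_l. lra. apply Rinv_le_contravar; lra. }
      assert (- (p - q) / (2 * (p * (1 - p))) = (q - p) / (2 * p) + (q - p) / (2 * (1 - p))) by (field; lra).
      assert ((q - p) / (2 * (1 - p)) <= (q - p) / (1 - p)).
      { unfold Rdiv. apply Rmult_le_compat_l. lra. apply Rinv_le_contravar; lra. }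
      lra.
    + apply Rle_trans with (1/2); [apply Rmin_r|].
      assert (1/2 <= 1 - p / q).
      { assert (p / q <= 1/2). { apply div_le_r; lra. } lra. }
      assert (0 <= (q - p) / (1 - p)) by (apply Rmult_le_pos; [lra|left; apply Rinv_0_lt_compat; lra]).
      lra.
  - assert (Hlt : q < p) by lra.
    pose proof (lnd p q ltac:(lra) ltac:(lra)).
    pose proof (lnd (1 - q) (1 - p) ltac:(lra) ltac:(lra)).
    assert (E1 : 1 - q / p = (p - q) / p) by (field; lra).
    assert (E2 : 1 - (1 - p) / (1 - q) = (p - q) / (1 - q)) by (field; lra).
    assert (0 <= (p - q) / p) by (apply Rmult_le_pos; [lra|left; apply Rinv_0_lt_compat; lra]).
    assert (0 <= (p - q) / (1 - q)) by (apply Rmult_le_pos; [lra|left; apply Rinv_0_lt_compat; lra]).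
    rewrite Rabs_right by lra. rewrite Rabs_left1 by lra.
    destruct (Rle_dec (1 - q) (2 * (1 - p))).
    + apply Rle_trans with ((p - q) / (2 * (p * (1 - p)))); [apply Rmin_l|].
      assert ((p - q) / (2 * (1 - p)) <= (p - q) / (1 - q)).
      { unfold Rdiv. apply Rmult_le_compat_l. lra. apply Rinv_le_contravar; lra. }
      assert ((p - q) / (2 * (p * (1 - p))) = (p - q) / (2 * p) + (p - q) / (2 * (1 - p))) by (field; lra).
      assert ((p - q) / (2 * p) <= (p - q) / p).
      { unfold Rdiv. apply Rmult_le_compat_l. lra. apply Rinv_le_contravar; lra. }
      lra.
    + apply Rle_trans with (1/2); [apply Rmin_r|].
      assert (1/2 <= 1 - (1 - p) / (1 - q)).
      { assert ((1 - p) / (1 - q) <= 1/2). { apply div_le_r; lra. } lra. }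
      assert (0 <= (p - q) / p) by (apply Rmult_le_pos; [lra|left; apply Rinv_0_lt_compat; lra]).
      lra.
Qed.

Lemma lower_main m p q : 0 < p < 1 -> 0 < q < 1 -> p <> q ->
  1 <= INR m * (p * (1 - p)) ->
  Rmin (sqrt (INR m) * Rabs (p - q) / sqrt (p * (1 - p))) 1 / 16000 <= l1_binom m p q.
Proof.
  intros Hp Hq Hpq Hv.
  assert (Hs : 0 < p * (1 - p)) by nra.
  set (s := p * (1 - p)) in *.
  set (ss := sqrt s).
  assert (Hss : 0 < ss) by (apply sqrt_lt_R0; auto).
  assert (Hss2 : ss * ss = s) by (apply sqrt_sqrt; lra).
  set (sm := sqrt (INR m)).
  assert (Hm0 : 0 <= INR m) by apply pos_INR.
  assert (Hsm2 : sm * sm = INR m) by (apply sqrt_sqrt; auto).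
  assert (Hsm : 0 <= sm) by apply sqrt_pos.
  set (s0 := sm * ss).
  assert (Hs02 : s0 * s0 = INR m * s) by (unfold s0; rewrite <- Hsm2, <- Hss2; ring).
  assert (Hs0 : 1 <= s0) by (assert (0 <= s0) by (unfold s0; nra); nra).
  set (beta := ln q - ln p - (ln (1 - q) - ln (1 - p))).
  set (b1 := Rmin (Rabs (p - q) / (2 * s)) (1/2)).
  assert (Hb1 : b1 <= Rabs beta) by (apply beta_bound; auto).
  assert (Hd : 0 < Rabs (p - q)) by (apply Rabs_pos_lt; lra).
  assert (Hb1p : 0 < b1).
  { unfold b1, Rmin. destruct (Rle_dec _ _). apply Rmult_lt_0_compat; [lra|apply Rinv_0_lt_compat; lra]. lra. }
  assert (Hbeta : beta <> 0) by (intro Hz; rewrite Hz, Rabs_R0 in Hb1; lra).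
  set (b := Rmin b1 (1 / (200 * s0))).
  assert (Hbp : 0 < b).
  { unfold b, Rmin. destruct (Rle_dec _ _). lra. apply Rmult_lt_0_compat; [lra|apply Rinv_0_lt_compat; lra]. }
  assert (Hbs : b * s0 <= 1/200).
  { assert (b <= 1 / (200 * s0)) by apply Rmin_r.
    apply Rle_trans with (1 / (200 * s0) * s0). apply Rmult_le_compat_r; lra.
    right; field; lra. }
  set (c := - (INR m * (ln (1 - q) - ln (1 - p))) / beta).
  assert (Hl1 : / 2 * E m p (fun k => Rmin (b * Rabs (INR k - c)) 1) <= l1_binom m p q).
  { unfold E, l1_binom. rewrite <- sum_scal_l. apply sum_Rle. intros k Hk.
    rewrite (Q_eq m p q k) by auto.
    set (L := INR k * (ln q - ln p) + INR (m - k) * (ln (1 - q) - ln (1 - p))).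
    assert (HL : L = beta * (INR k - c)).
    { unfold L, c, beta. rewrite minus_INR by auto. field. exact Hbeta. }
    assert (HP : 0 <= binom_pmf m p k) by (apply pmf_nonneg; auto; lra).
    replace (binom_pmf m p k - binom_pmf m p k * exp L) with (binom_pmf m p k * (1 - exp L)) by ring.
    rewrite Rabs_mult, (Rabs_right (binom_pmf m p k)) by lra.
    pose proof (exp_gap L).
    assert (Rmin (b * Rabs (INR k - c)) 1 <= Rmin (Rabs L) 1).
    { apply Rle_min_compat_r. rewrite HL, Rabs_mult. apply Rmult_le_compat_r. apply Rabs_pos.
      apply Rle_trans with b1. apply Rmin_l. auto. }
    apply Rle_trans with (binom_pmf m p k * (Rmin (Rabs L) 1 / 2)).
    - replace (/ 2 * (binom_pmf m p k * Rmin (b * Rabs (INR k - c)) 1)) with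
        (binom_pmf m p k * (Rmin (b * Rabs (INR k - c)) 1 / 2)) by (field).
      apply Rmult_le_compat_l; lra.
    - apply Rmult_le_compat_l; lra. }
  pose proof (core m p c b s0 Hp Hs02 Hs0 Hbp Hbs).
  assert (Key : Rmin (sm * Rabs (p - q) / ss) 1 / 200 <= b * s0).
  { assert (Ev : Rabs (p - q) / (2 * s) * s0 = sm * Rabs (p - q) / ss / 2).
    { unfold s0. rewrite <- Hss2. field. lra. }
    set (v := sm * Rabs (p - q) / ss) in *.
    assert (Hmv : Rmin v 1 <= v) by apply Rmin_l.
    assert (Hm1 : Rmin v 1 <= 1) by apply Rmin_r.
    assert (0 <= Rmin v 1).
    { apply Rmin_glb; [|lra]. unfold v. apply Rmult_le_pos. apply Rmult_le_pos; [auto|apply Rabs_pos].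
      left; apply Rinv_0_lt_compat; auto. }
    unfold b, b1. unfold Rmin at 2 3. 
    destruct (Rle_dec (Rabs (p - q) / (2 * s)) (1 / 2)); destruct (Rle_dec _ (1 / (200 * s0))).
    - rewrite Ev. lra.
    - replace (1 / (200 * s0) * s0) with (1/200) by (field; lra). lra.
    - nra.
    - replace (1 / (200 * s0) * s0) with (1/200) by (field; lra). lra. }
  lra.
Qed.

Lemma rate_le1 m p q : rate m p q <= Rmin (INR m * Rabs (p - q)) 1.
Proof.
  unfold rate. destruct (Req_EM_T _ _). lra.
  apply Rmin_glb. eapply Rle_trans; [apply Rmin_l|apply Rmin_l]. apply Rmin_r.
Qed.

Lemma rate_le2 m p q : p * (1 - p) <> 0 ->
  rate m p q <= Rmin (sqrt (INR m) * Rabs (p - q) / sqrt (p * (1 - p))) 1.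
Proof.
  intros H. unfold rate. destruct (Req_EM_T _ _). contradiction.
  apply Rmin_glb. eapply Rle_trans; [apply Rmin_l|apply Rmin_r]. apply Rmin_r.
Qed.

Lemma l1_pq m p : l1_binom m p p = 0.
Proof.
  unfold l1_binom. apply sum_eq_R0. intros. rewrite Rminus_diag, Rabs_R0. auto.
Qed.

Lemma pow_le1 x m : 0 <= x <= 1 -> x ^ m <= 1.
Proof. intros. rewrite <- (pow1 m). apply pow_incr. lra. Qed.

Lemma rmin_nn a : 0 <= a -> 0 <= Rmin a 1.
Proof. intros; apply Rmin_glb; lra. Qed.

Lemma lower m p q c1 : (1 <= m)%nat -> 0 <= p <= 1 -> 0 <= q <= 1 ->
  c1 = Rmin (/ (2 * exp 4)) (/ 16000) -> c1 * rate m p q <= l1_binom m p q.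
Proof.
  intros Hm Hp Hq Hc.
  assert (Hc0 : 0 < c1).
  { rewrite Hc. unfold Rmin. destruct (Rle_dec _ _). apply Rinv_0_lt_compat. pose proof (exp_pos 4). lra. lra. }
  assert (Hc1 : c1 <= / 16000) by (rewrite Hc; apply Rmin_r).
  assert (Hc2 : c1 <= / (2 * exp 4)) by (rewrite Hc; apply Rmin_l).
  pose proof (l1_nonneg m p q) as Hl0.
  set (R0 := Rmin (INR m * Rabs (p - q)) 1).
  assert (HR0 : rate m p q <= R0) by apply rate_le1.
  assert (HR0n : 0 <= R0) by (apply rmin_nn; apply Rmult_le_pos; [apply pos_INR|apply Rabs_pos]).
  assert (HR01 : R0 <= 1) by apply Rmin_r.
  assert (Hcr : c1 * rate m p q <= c1 * R0) by (apply Rmult_le_compat_l; lra).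
  assert (HcR : c1 * R0 <= c1) by nra.
  assert (HmI : 1 <= INR m) by (apply (le_INR 1); auto).
  destruct (Req_dec p q) as [Heq|Hpq].
  { subst q. rewrite l1_pq. unfold R0 in *. rewrite Rminus_diag, Rabs_R0, Rmult_0_r in *.
    unfold Rmin in Hcr. destruct (Rle_dec 0 1); lra. }
  destruct (Req_dec p 0) as [Hp0|Hp0].
  { subst p. pose proof (l1_ge_term m 0 q 0 ltac:(lia)). rewrite !pmf_0 in H.
    rewrite Rminus_0_r, pow1 in H.
    pose proof (one_minus_pow m q Hq).
    unfold R0 in *. rewrite Rminus_0_l, Rabs_Ropp, Rabs_right in Hcr by lra.
    assert (0 <= (1 - q) ^ m) by (apply pow_le; lra).
    rewrite Rabs_right in H by (assert ((1 - q) ^ m <= 1) by (apply pow_le1; lra); lra).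
    assert (Rmin (INR m * q) 1 / 2 >= c1 * Rmin (INR m * q) 1).
    { assert (0 <= Rmin (INR m * q) 1) by (apply rmin_nn; nra). nra. }
    lra. }
  destruct (Req_dec p 1) as [Hp1|Hp1].
  { subst p. pose proof (l1_ge_term m 1 q m ltac:(lia)). rewrite !pmf_m in H.
    rewrite pow1 in H.
    pose proof (one_minus_pow m (1 - q) ltac:(lra)). replace (1 - (1 - q)) with q in H0 by ring.
    unfold R0 in *. rewrite Rabs_right in Hcr by lra.
    assert (0 <= q ^ m) by (apply pow_le; lra).
    rewrite Rabs_right in H by (assert (q ^ m <= 1) by (apply pow_le1; lra); lra).
    assert (Rmin (INR m * (1 - q)) 1 / 2 >= c1 * Rmin (INR m * (1 - q)) 1).
    { assert (0 <= Rmin (INR m * (1 - q)) 1) by (apply rmin_nn; nra). nra. }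
    lra. }
  assert (Hp' : 0 < p < 1) by lra.
  assert (Hs : 0 < p * (1 - p)) by nra.
  destruct (Rlt_le_dec (INR m * (p * (1 - p))) 1) as [Hsm|Hsm].
  - destruct (Rle_dec p (1/2)).
    + assert (INR m * p <= 2) by nra.
      pose proof (small_lb m p q ltac:(lra) H Hq).
      pose proof (l1_ge_term m p q 0 ltac:(lia)). rewrite !pmf_0 in H1.
      assert (/ (2 * exp 4) * R0 >= c1 * R0) by nra. unfold R0 in *. lra.
    + assert (INR m * (1 - p) <= 2) by nra.
      pose proof (small_lb m (1 - p) (1 - q) ltac:(lra) H ltac:(lra)).
      pose proof (l1_ge_term m p q m ltac:(lia)). rewrite !pmf_m in H1.
      replace (1 - (1 - p)) with p in H0 by ring. replace (1 - (1 - q)) with q in H0 by ring.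
      replace (1 - p - (1 - q)) with (- (p - q)) in H0 by ring. rewrite Rabs_Ropp in H0.
      assert (/ (2 * exp 4) * R0 >= c1 * R0) by nra. unfold R0 in *. lra.
  - destruct (Req_dec q 0) as [Hq0|Hq0].
    { subst q. pose proof (l1_ge_term m p 0 0 ltac:(lia)). rewrite !pmf_0 in H.
      rewrite Rminus_0_r, pow1 in H.
      pose proof (one_minus_pow m p ltac:(lra)).
      assert (1 <= INR m * p) by nra.
      assert (Rmin (INR m * p) 1 = 1) by (unfold Rmin; destruct (Rle_dec _ _); lra).
      assert ((1 - p) ^ m <= 1) by (apply pow_le1; lra).
      rewrite Rabs_left1 in H by lra. lra. }
    destruct (Req_dec q 1) as [Hq1|Hq1].
    { subst q. pose proof (l1_ge_term m p 1 m ltac:(lia)). rewrite !pmf_m in H.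
      rewrite pow1 in H.
      pose proof (one_minus_pow m (1 - p) ltac:(lra)). replace (1 - (1 - p)) with p in H0 by ring.
      assert (1 <= INR m * (1 - p)) by nra.
      assert (Rmin (INR m * (1 - p)) 1 = 1) by (unfold Rmin; destruct (Rle_dec _ _); lra).
      assert (p ^ m <= 1) by (apply pow_le1; lra).
      rewrite Rabs_left1 in H by lra. lra. }
    pose proof (lower_main m p q Hp' ltac:(lra) Hpq Hsm).
    pose proof (rate_le2 m p q ltac:(lra)).
    set (V := Rmin (sqrt (INR m) * Rabs (p - q) / sqrt (p * (1 - p))) 1) in *.
    assert (0 <= V).
    { apply rmin_nn. apply Rmult_le_pos. apply Rmult_le_pos; [apply sqrt_pos|apply Rabs_pos].
      left; apply Rinv_0_lt_compat, sqrt_lt_R0; auto. }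
    assert (c1 * rate m p q <= c1 * V) by (apply Rmult_le_compat_l; lra).
    assert (c1 * V <= V / 16000) by nra.
    lra.
Qed.

Lemma upper m p q : (1 <= m)%nat -> 0 <= p <= 1 -> 0 <= q <= 1 -> l1_binom m p q <= 3 * rate m p q.
Proof.
  intros Hm Hp Hq.
  assert (HmI : 1 <= INR m) by (apply (le_INR 1); auto).
  pose proof (l1_le_2 m p q Hp Hq).
  pose proof (l1_le_lin m p q Hp Hq).
  pose proof (l1_nonneg m p q).
  assert (0 <= INR m * Rabs (p - q)) by (apply Rmult_le_pos; [apply pos_INR|apply Rabs_pos]).
  unfold rate. destruct (Req_EM_T _ _) as [Hs|Hs].
  - assert (l1_binom m p q / 3 <= Rmin (INR m * Rabs (p - q)) 1) by (apply Rmin_glb; lra). lra.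
  - assert (Hp' : 0 < p < 1).
    { split; destruct (Req_dec p 0); destruct (Req_dec p 1); subst; try lra; ring_simplify in Hs; lra. }
    assert (Hs' : 0 < p * (1 - p)) by nra.
    set (v := sqrt (INR m) * Rabs (p - q) / sqrt (p * (1 - p))).
    assert (Hv : l1_binom m p q <= 3 * v).
    { destruct (Req_dec p q) as [->|Hpq].
      - rewrite l1_pq. unfold v. rewrite Rminus_diag, Rabs_R0. unfold Rdiv. lra.
      - set (x := INR m * ((p - q) ^ 2 / (p * (1 - p)))).
        assert (Hvx : v * v = x).
        { unfold v, x. 
          assert (Hsq : sqrt (p * (1 - p)) * sqrt (p * (1 - p)) = p * (1 - p)) by (apply sqrt_sqrt; lra).
          assert (Hsm : sqrt (INR m) * sqrt (INR m) = INR m) by (apply sqrt_sqrt, pos_INR).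
          assert (0 < sqrt (p * (1 - p))) by (apply sqrt_lt_R0; lra).
          transitivity ((sqrt (INR m) * sqrt (INR m)) * (Rabs (p - q) ^ 2 / (sqrt (p * (1 - p)) * sqrt (p * (1 - p))))).
          field. lra. rewrite Hsm, Hsq, pow2_abs. reflexivity. }
        assert (Hv0 : 0 <= v).
        { unfold v. apply Rmult_le_pos. apply Rmult_le_pos; [apply sqrt_pos|apply Rabs_pos].
          left; apply Rinv_0_lt_compat, sqrt_lt_R0; lra. }
        destruct (Rle_dec x (1/2)).
        + assert (Hx0 : 0 < x).
          { unfold x. apply Rmult_lt_0_compat. lra.
            apply Rmult_lt_0_compat. rewrite <- pow2_abs. apply pow_lt. apply Rabs_pos_lt. lra.
            apply Rinv_0_lt_compat; lra. }
          pose proof (l1_chi m p q Hp' Hq Hx0 r) as HC. cbv zeta in HC. fold x in HC.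
          assert (sqrt x = v) by (rewrite <- Hvx; apply sqrt_square; auto).
          lra.
        + assert (v > 2/3) by nra. lra. }
    assert (l1_binom m p q / 3 <= Rmin (Rmin (INR m * Rabs (p - q)) v) 1).
    { apply Rmin_glb; [apply Rmin_glb|]; lra. }
    lra.
Qed.
Theorem theorem5 :
  exists c1 c2 : R, 0 < c1 /\ c1 <= c2 /\
    forall (m : nat) (p q : R),
      (1 <= m)%nat -> 0 <= p <= 1 -> 0 <= q <= 1 ->
      c1 * rate m p q <= l1_binom m p q /\
      l1_binom m p q <= c2 * rate m p q.
Proof.
  exists (Rmin (/ (2 * exp 4)) (/ 16000)), 3.
  assert (Hc0 : 0 < Rmin (/ (2 * exp 4)) (/ 16000)).
  { unfold Rmin. destruct (Rle_dec _ _). apply Rinv_0_lt_compat. pose proof (exp_pos 4). lra. lra. }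
  assert (Hc1 : Rmin (/ (2 * exp 4)) (/ 16000) <= / 16000) by apply Rmin_r.
  split; [auto|split; [lra|]].
  intros m p q Hm Hp Hq. split.
  - apply lower; auto.
  - apply upper; auto.
Qed.
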